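(* Let $G$ be a finite graph. The following are equivalent: (1) $G$ is a König–Egerváry graph; (2) there is a non-empty HKE set-system $F\subseteq\Omega(G)$ such that there is a matching in $G$ between $V(G)-\bigcup F$ and $\bigcap F$ (i.e. a matching $M$ saturating every vertex of $V(G)-\bigcup F$, each matched to a distinct vertex of $\bigcap F$), and $|\bigcap\Gamma_1-\bigcup\Gamma_2|=|\bigcap\Gamma_2-\bigcup\Gamma_1|$ for every two non-empty disjoint subfamilies $\Gamma_1,\Gamma_2\subseteq F$; (3) there is a non-empty HKE set-system $F\subseteq\Omega(G)$ with a matching between $V(G)-\bigcup F$ and $\bigcap F$ as in (2), and $|\bigcap\Gamma_1-\bigcup\Gamma_2|=|\bigcap\Gamma_2-\bigcup\Gamma_1|$ for every two non-empty disjoint subfamilies $\Gamma_1,\Gamma_2\subseteq F$ with $\Gamma_1\cup\Gamma_2=F$.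
   Context: For a graph $G$, $\alpha(G)$ is the maximum size of an independent set, $\mu(G)$ is the matching number, and $\Omega(G)$ is the family of all maximum independent sets of $G$. $G$ is a König–Egerváry (KE) graph if $\alpha(G)+\mu(G)=|V(G)|$. A set-system $F$ (non-empty finite family of finite non-empty sets) is a hereditary König–Egerváry (HKE) set-system if there is a positive integer $\alpha$ such that $|\bigcup\Gamma|+|\bigcap\Gamma|=2\alpha$ for every non-empty subfamily $\Gamma\subseteq F$. Graphs are assumed to have at least one vertex. *)

(* Defs.v *)
(* A finite simple graph is a symmetric irreflexive relation
   e : rel T on a finite type T of vertices. *)
From HB Require Import structures.
From mathcomp Require Import all_boot.
Set Implicit Arguments. Unset Strict Implicit. Unset Printing Implicit Defensive.

Section Graphs.
Variables (T : finType) (e : rel T).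

Definition independent (A : {set T}) : bool :=
  [forall x in A, forall y in A, ~~ e x y].

Definition alpha : nat := \max_(A : {set T} | independent A) #|A|.

Definition matching (M : {set {set T}}) : bool :=
  [forall m in M, exists x, exists y, e x y && (m == [set x; y])]
  && trivIset M.

Definition mu : nat := \max_(M : {set {set T}} | matching M) #|M|.

Definition KE : Prop := alpha + mu = #|T|.

Definition Omega : {set {set T}} :=
  [set A : {set T} | independent A && (#|A| == alpha)].

End Graphs.

Definition bigcapF (T : finType) (F : {set {set T}}) : {set T} :=
  \bigcap_(A in F) A.

Definition set_system (T : finType) (F : {set {set T}}) : Prop :=
  F != set0 /\ set0 \notin F.

Definition HKE (T : finType) (F : {set {set T}}) : Prop :=
  set_system F /\
  exists a : nat, 0 < a /\
    forall Gam : {set {set T}}, Gam != set0 -> Gam \subset F ->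
      #|cover Gam| + #|bigcapF Gam| = 2 * a.

(* there is a matching in G between X and Y: a matching M saturating every
   vertex of X, each matched to a vertex of Y (distinctness of partners is
   automatic since M is a matching) *)
Definition matching_between (T : finType) (e : rel T) (X Y : {set T}) : Prop :=
  exists M : {set {set T}}, matching e M /\
    forall x, x \in X -> exists2 y, y \in Y & [set x; y] \in M.

(* Main.v *)
Require Import Defs.
From mathcomp Require Import all_boot.
From mathcomp Require Import zify.
From Stdlib Require Import Lia.
Set Implicit Arguments. Unset Strict Implicit. Unset Printing Implicit Defensive.

Section HallS.
Variables (T : finType) (r : rel T).

Definition nbh (Y A : {set T}) := [set y in Y | [exists x in A, r x y]].

Lemma hall (X Y : {set T}) :
  (forall A : {set T}, A \subset X -> #|A| <= #|nbh Y A|) ->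
  exists f : T -> T, {in X &, injective f} /\
    forall x, x \in X -> f x \in Y /\ r x (f x).
Proof.
have [n] := ubnP #|X|; elim: n X Y => // n IH X Y ltX hc.
case: (boolP [exists A : {set T}, [&& A \subset X, A != set0, A != X & #|nbh Y A| <= #|A|]]).
- case/existsP=> A /and4P [sAX nA0 nAX tA].
  have [f1 [i1 h1]] : exists f : T -> T, {in A &, injective f} /\
    forall x, x \in A -> f x \in Y /\ r x (f x).
    apply: IH => [|B sBA]; last by apply: hc; apply: subset_trans sBA sAX.
    have : A \proper X by rewrite properEneq nAX.
    move/proper_card; lia.
  have [f2 [i2 h2]] : exists f : T -> T, {in X :\: A &, injective f} /\
    forall x, x \in X :\: A -> f x \in Y :\: nbh Y A /\ r x (f x).
    apply: IH => [|C sCXA].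
      rewrite cardsD (setIidPr sAX).
      case/set0Pn: nA0 => a aA.
      have : 0 < #|A| by apply/card_gt0P; exists a.
      move: ltX; have := subset_leq_card sAX. lia.
    have dCA : [disjoint C & A].
      rewrite -setI_eq0; apply/eqP/setP=> z; rewrite !inE.
      apply/negP=> /andP [zC zA]; move/subsetP: sCXA => /(_ z zC).
      by rewrite !inE zA.
    have sCAX : C :|: A \subset X.
      rewrite subUset sAX andbT; apply: subset_trans sCXA _; exact: subsetDl.
    have := hc _ sCAX.
    rewrite cardsU (disjoint_setI0 dCA) cards0 subn0.
    have sub : nbh Y (C :|: A) \subset nbh (Y :\: nbh Y A) C :|: nbh Y A.
      apply/subsetP=> y; rewrite !inE => /andP [yY /exists_inP [x]].
      rewrite inE => /orP [xC|xA] rxy.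
        rewrite yY /=; case: [exists x0 in A, r x0 y]; rewrite ?orbT //=.
        by rewrite orbF; apply/exists_inP; exists x.
      by rewrite yY /=; apply/orP; right; apply/exists_inP; exists x.
    have := subset_leq_card sub.
    have := leq_card_setU (nbh (Y :\: nbh Y A) C) (nbh Y A).
    case => + _. lia.
  exists (fun x => if x \in A then f1 x else f2 x); split.
    move=> x y xX yX /=.
    case: ifP => xA; case: ifP => yA.
    + exact: i1.
    + move=> E; have [f1Y rx] := h1 x xA.
      have : y \in X :\: A by rewrite inE yA yX.
      move/h2 => [] + _; rewrite -E inE => /andP [] /negP []; rewrite inE f1Y.
      by apply/exists_inP; exists x.
    + move=> E; have [f1Y ry] := h1 y yA.
      have : x \in X :\: A by rewrite inE xA xX.
      move/h2 => [] + _; rewrite E inE => /andP [] /negP []; rewrite inE f1Y.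
      by apply/exists_inP; exists y.
    + by apply: i2; rewrite inE ?xA ?yA.
  move=> x xX; case: ifP => xA; first exact: h1.
  have : x \in X :\: A by rewrite inE xA xX.
  by move/h2; rewrite inE => [[/andP []]].
- rewrite negb_exists => /forallP ntight.
  case: (set_0Vmem X) => [->|[x xX]].
    by exists id; split=> [? ? | x]; rewrite inE.
  have : 1 <= #|nbh Y [set x]|.
    apply: leq_trans (hc _ _); first by rewrite cards1.
    by rewrite sub1set.
  case/card_gt0P => y; rewrite inE => /andP [yY /exists_inP [x']].
  rewrite inE => /eqP -> rxy.
  have [f2 [i2 h2]] : exists f : T -> T, {in X :\ x &, injective f} /\
    forall z, z \in X :\ x -> f z \in Y :\ y /\ r z (f z).
    apply: IH => [|C sC].
      move: ltX; rewrite (cardsD1 x X) xX. lia.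
    case: (set_0Vmem C) => [->|[c cC]]; first by rewrite cards0.
    have := ntight C; rewrite negb_and.
    have sCX : C \subset X by apply: subset_trans sC (subsetDl _ _).
    rewrite sCX /= negb_and.
    have -> /= : C != set0 by apply/set0Pn; exists c.
    have -> /= : C != X.
      apply/eqP=> CX; move/subsetP: sC => /(_ x); rewrite CX xX !inE eqxx.
      by move/(_ isT).
    rewrite -ltnNge => lt.
    have -> : nbh (Y :\ y) C = nbh Y C :\ y.
      apply/setP=> z; rewrite !inE; case: (z == y) => //.
    move: lt; rewrite (cardsD1 y (nbh Y C)). case: (y \in nbh Y C) => /=; lia.
  exists (fun z => if z == x then y else f2 z); split.
    move=> a b aX bX /=; case: eqP => ax; case: eqP => bx.
    + by rewrite ax bx.
    + move=> E; have : b \in X :\ x by rewrite !inE bX andbT; apply/eqP.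
      by move/h2 => [] + _; rewrite -E !inE eqxx.
    + move=> E; have : a \in X :\ x by rewrite !inE aX andbT; apply/eqP.
      by move/h2 => [] + _; rewrite E !inE eqxx.
    + by apply: i2; rewrite !inE ?aX ?bX andbT; apply/eqP.
  move=> z zX; case: eqP => [->|zx]; first by [].
  have : z \in X :\ x by rewrite !inE zX andbT; apply/eqP.
  by move/h2; rewrite !inE => [[/andP []]].
Qed.
End HallS.

Section G.
Variables (T : finType) (e : rel T) (x0 : T).

Lemma indepP S x y : independent e S -> x \in S -> y \in S -> ~~ e x y.
Proof. by move=> /forall_inP /(_ x) H xS yS; move: (H xS) => /forall_inP; apply. Qed.

Lemma alpha_ge S : independent e S -> #|S| <= alpha e.
Proof. by move=> iS; rewrite /alpha; exact: (@leq_bigmax_cond _ (independent e) (fun A : {set T} => #|A|) S iS). Qed.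

Lemma mu_ge M : matching e M -> #|M| <= mu e.
Proof. by move=> iM; rewrite /mu; exact: (@leq_bigmax_cond _ (matching e) (fun A : {set {set T}} => #|A|) M iM). Qed.

Lemma indep0 : independent e set0.
Proof. by apply/forall_inP=> x; rewrite inE. Qed.

Lemma matching0 : matching e set0.
Proof.
apply/andP; split; first by apply/forall_inP=> x; rewrite inE.
by apply/trivIsetP=> A B; rewrite inE.
Qed.

Lemma max_indep : exists2 S, independent e S & #|S| = alpha e.
Proof.
have : 0 < #|[pred A : {set T} | independent e A]|.
  by apply/card_gt0P; exists set0; rewrite inE indep0.
move/(eq_bigmax_cond (fun A : {set T} => #|A|)) => [S] + H.
by rewrite inE => iS; exists S.
Qed.

Lemma max_matching : exists2 M, matching e M & #|M| = mu e.
Proof.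
have : 0 < #|[pred A : {set {set T}} | matching e A]|.
  by apply/card_gt0P; exists set0; rewrite inE matching0.
move/(eq_bigmax_cond (fun A : {set {set T}} => #|A|)) => [S] + H.
by rewrite inE => iS; exists S.
Qed.

Lemma matching_edge M m : matching e M -> m \in M ->
  exists x y, e x y /\ m = [set x; y].
Proof.
case/andP=> /forall_inP H _ /H /existsP [x /existsP [y /andP [exy /eqP ->]]].
by exists x, y.
Qed.

Lemma matching_triv M : matching e M -> trivIset M.
Proof. by case/andP. Qed.

Definition pk (S m : {set T}) := odflt x0 [pick x in m :\: S].

Lemma pk_in S m : m :\: S != set0 -> pk S m \in m :\: S.
Proof.
rewrite /pk; case: pickP => [x -> //|H] /set0Pn [x]; by rewrite H.
Qed.

Lemma pkin S M : independent e S -> matching e M ->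
  forall m, m \in M -> pk S m \in m :\: S.
Proof.
move=> iS mM m mM'; apply: pk_in; have [x [y [exy ->]]] := matching_edge mM mM'.
apply/set0Pn; case: (boolP (x \in S)) => xS.
  case: (boolP (y \in S)) => yS; last by exists y; rewrite !inE yS eqxx orbT.
  by move: (indepP iS xS yS); rewrite exy.
by exists x; rewrite !inE xS eqxx.
Qed.

Lemma triv_meet M m m' z : matching e M -> m \in M -> m' \in M ->
  z \in m -> z \in m' -> m = m'.
Proof.
move=> mM mM1 mM2 z1 z2; apply/eqP; apply/negPn/negP=> ne.
move/trivIsetP: (matching_triv mM) => /(_ m m' mM1 mM2 ne).
by move/disjoint_setI0/setP/(_ z); rewrite !inE z1 z2.
Qed.

Lemma pk_inj S M : independent e S -> matching e M -> {in M &, injective (pk S)}.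
Proof.
move=> iS mM m m' mM1 mM2 E.
apply: (triv_meet (z := pk S m) mM mM1 mM2).
  by move: (pkin iS mM mM1); rewrite inE => /andP [].
by move: (pkin iS mM mM2); rewrite E inE => /andP [].
Qed.

Lemma pk_sub S M : independent e S -> matching e M -> [set pk S m | m in M] \subset ~: S.
Proof.
move=> iS mM; apply/subsetP=> z /imsetP [m mM1 ->]; move: (pkin iS mM mM1).
by rewrite !inE; case/andP.
Qed.

Lemma upper S M : independent e S -> matching e M -> #|M| <= #|~: S|.
Proof.
move=> iS mM; move/subset_leq_card: (pk_sub iS mM).
by rewrite card_in_imset //; apply: pk_inj.
Qed.

Lemma KE_of S : independent e S -> matching_between e (~: S) S -> KE e.
Proof.
move=> iS [M [mM H]].
have [S0 iS0 eS0] := max_indep.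
have [M0 mM0 eM0] := max_matching.
have := upper iS0 mM0; rewrite eM0 => le.
have := cardsC S0; rewrite eS0 => cS0.
have : ~: S \subset [set pk S m | m in M].
  apply/subsetP=> x xS; have [y yS my] := H x xS.
  apply/imsetP; exists [set x; y] => //.
  have : [set x; y] :\: S = [set x].
    apply/setP=> z; rewrite !inE; case: (eqVneq z x) => [->|zx].
      by move: xS; rewrite inE => ->.
    by case: (eqVneq z y) => [->|]; rewrite ?yS ?andbF.
  move=> E; rewrite /pk E; case: pickP => [z|/(_ x)]; rewrite inE.
    by move/eqP ->.
  by rewrite eqxx.
move/subset_leq_card => le2.
have := leq_trans le2 (leq_imset_card _ _).
have := alpha_ge iS; have := mu_ge mM; have := cardsC S.
rewrite /KE => cS le3 le4 le5.
apply: (@eq_trans _ _ (#|S| + #|~:S|)); last exact: cardsC S.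
apply/eqP; rewrite eqn_leq; apply/andP; split.
  by rewrite cS -cS0 leq_add2l.
by apply: leq_add le4 (leq_trans le5 le3).
Qed.

Lemma KE_match S : symmetric e -> irreflexive e -> KE e -> independent e S ->
  #|S| = alpha e -> matching_between e (~: S) S.
Proof.
move=> esym eirr ke iS eS.
have [M mM eM] := max_matching.
exists M; split => // x xS.
have cS := cardsC S; rewrite eS in cS.
have eqI : [set pk S m | m in M] = ~: S.
  apply/eqP; rewrite eqEcard pk_sub //= card_in_imset; last exact: pk_inj.
  rewrite eM; move: ke; rewrite /KE -cS => /eqP.
  by rewrite eqn_add2l => /eqP ->.
move: xS; rewrite -eqI => /imsetP [m mM1 xm].
have := pkin iS mM mM1; rewrite -xm inE => /andP [xnS xm'].
have [a [b [eab Em]]] := matching_edge mM mM1.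
have [y [exy Emy]] : exists y, e x y /\ m = [set x; y].
  move: xm'; rewrite Em !inE => /orP [] /eqP ->.
    by exists b.
  by exists a; rewrite esym setUC.
exists y => //; last by rewrite -Emy.
apply/negPn/negP => ynS.
have : y \in ~: S by rewrite inE.
rewrite -eqI => /imsetP [m' mM2 ym'].
have ym : y \in m by rewrite Emy !inE eqxx orbT.
have ym2 : y \in m' by move: (pkin iS mM mM2); rewrite -ym' inE => /andP [].
have Emm := triv_meet mM mM1 mM2 ym ym2.
by move: exy; rewrite xm ym' Emm eirr.
Qed.


Lemma Omega_indep S : S \in Omega e -> independent e S /\ #|S| = alpha e.
Proof. by rewrite inE => /andP [? /eqP]. Qed.

Lemma coverD1' (F : {set {set T}}) S0 : S0 \in F -> cover F = S0 :|: cover (F :\ S0).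
Proof. by move=> SF; rewrite /cover (big_setD1 _ SF). Qed.

Lemma capD1 (F : {set {set T}}) S0 : S0 \in F -> bigcapF F = S0 :&: bigcapF (F :\ S0).
Proof. by move=> SF; rewrite /bigcapF (big_setD1 _ SF). Qed.

Lemma cap_sub (F : {set {set T}}) S : S \in F -> bigcapF F \subset S.
Proof. by move=> SF; apply/subsetP=> z /bigcapP; apply. Qed.

Lemma cover_sub (F : {set {set T}}) S : S \in F -> S \subset cover F.
Proof. by move=> SF; apply/subsetP=> z zS; apply/bigcupP; exists S. Qed.

Lemma reduce (esym : symmetric e) k : forall F : {set {set T}}, #|F| = k.+1 ->
  F \subset Omega e ->
  (forall G, G != set0 -> G \subset F -> #|cover G| + #|bigcapF G| = 2 * alpha e) ->
  matching_between e (~: cover F) (bigcapF F) ->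
  exists2 S, S \in F & matching_between e (~: S) S.
Proof.
elim: k => [|k IH] F cF sFO hke mb.
  have /cards1P [S FS] : #|F| == 1 by rewrite cF.
  exists S; first by rewrite FS inE.
  by move: mb; rewrite FS cover1 /bigcapF big_set1.
have [S0 S0F] : exists S0, S0 \in F by apply/card_gt0P; rewrite cF.
set F' := F :\ S0.
have cF' : #|F'| = k.+1 by move: cF; rewrite (cardsD1 S0 F) S0F add1n => [[]].
have sF'F : F' \subset F by apply: subsetDl.
have [T0 T0F'] : exists T0, T0 \in F' by apply/card_gt0P; rewrite cF'.
have [S SF' ms] : exists2 S, S \in F' & matching_between e (~: S) S; last first.
  by exists S => //; apply: (subsetP sF'F).
apply: IH => //.
- by apply: subset_trans sF'F sFO.
- by move=> G G0 sG; apply: hke => //; apply: subset_trans sG sF'F.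
have [iS0 cS0] := Omega_indep (subsetP sFO _ S0F).
have [iT0 cT0] := Omega_indep (subsetP sFO _ (subsetP sF'F _ T0F')).
set U' := cover F'. set I' := bigcapF F'.
have EU : cover F = S0 :|: U' := coverD1' S0F.
have EI : bigcapF F = S0 :&: I' := capD1 S0F.
set R0 := S0 :\: U'. set Q := I' :\: S0.
have I'T0 : I' \subset T0 := cap_sub T0F'.
have T0U' : T0 \subset U' := cover_sub T0F'.
have F0 : F != set0 by apply/set0Pn; exists S0.
have F'0 : F' != set0 by apply/set0Pn; exists T0.
have hF := hke F F0 (subxx F).
have hF' := hke F' F'0 sF'F.
have cardRQ : #|R0| = #|Q|.
  move: hF; rewrite EU EI cardsU.
  have := cardsD S0 U'; rewrite -/R0 => cR.
  have := cardsD I' S0; rewrite -/Q setIC => cQ.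
  have := subset_leq_card (subsetIl S0 U').
  have := subset_leq_card (subsetIl S0 I').
  have := subset_leq_card (subsetIl S0 U').
  move: hF'; rewrite -/U' -/I'.
  lia.
have BQ : forall z, z \in Q -> z \in I' /\ z \notin S0.
  by move=> z; rewrite inE => /andP [].
have RQ : forall z, z \in R0 -> z \in S0 /\ z \notin U'.
  by move=> z; rewrite inE => /andP [].
have hc : forall B : {set T}, B \subset Q -> #|B| <= #|nbh e R0 B|.
  move=> B sBQ.
  set N := nbh e R0 B.
  have sNS0 : N \subset S0.
    by apply/subsetP=> z; rewrite inE => /andP [/RQ []].
  set S' := (S0 :\: N) :|: B.
  have key : forall a b, a \in B -> b \in S0 :\: N -> ~~ e a b.
    move=> a b aB; rewrite in_setD => /andP [bN bS0]; apply/negP => eab.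
    have [aI' aS0] := BQ a (subsetP sBQ a aB).
    case: (boolP (b \in U')) => bU.
      move: bU => /bigcupP [T1 TF' bT].
      have aT : a \in T1 by move/bigcapP: aI' => /(_ T1 TF').
      have [iT _] := Omega_indep (subsetP sFO _ (subsetP sF'F _ TF')).
      by move: (indepP iT aT bT); rewrite eab.
    move/negP: bN; apply; rewrite inE; apply/andP; split.
      by rewrite inE bU bS0.
    by apply/exists_inP; exists a.
  have iS' : independent e S'.
    apply/forall_inP => x xS'; apply/forall_inP => y yS'.
    move: xS' yS'; rewrite !in_setU => /orP [xA|xB] /orP [yA|yB].
    + move: xA yA; rewrite !in_setD => /andP [_ xS0] /andP [_ yS0].
      exact: indepP iS0 xS0 yS0.
    + by rewrite esym; apply: key.
    + exact: key.
    + have xT := subsetP I'T0 x (BQ x (subsetP sBQ x xB)).1.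
      have yT := subsetP I'T0 y (BQ y (subsetP sBQ y yB)).1.
      exact: indepP iT0 xT yT.
  have dj : (S0 :\: N) :&: B = set0.
    apply/setP=> z; rewrite !inE; apply/negP=> /andP [/andP [_ zS0] zB].
    by have [_] := BQ z (subsetP sBQ z zB); rewrite zS0.
  have := alpha_ge iS'; rewrite /S' cardsU dj cards0 subn0 cardsD (setIidPr sNS0).
  have := subset_leq_card sNS0.
  lia.
have [f [finj hf]] := @hall _ e Q R0 hc.
have fQ : [set f x | x in Q] = R0.
  apply/eqP; rewrite eqEcard card_in_imset // cardRQ leqnn andbT.
  by apply/subsetP=> z /imsetP [x xQ ->]; case: (hf x xQ).
have QU : forall z, z \in Q -> z \in cover F /\ z \notin bigcapF F.
  move=> z /BQ [zI zS0]; rewrite EU EI !inE (negbTE zS0) /=; split => //.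
  by apply: (subsetP T0U'); apply: (subsetP I'T0).
have RU : forall z, z \in R0 -> z \in cover F /\ z \notin bigcapF F.
  move=> z /RQ [zS0 zU]; rewrite EU EI !inE zS0 /=; split => //.
  apply/negP=> zI; move/negP: zU; apply.
  by apply: (subsetP T0U'); apply: (subsetP I'T0).
case: mb => M1 [mM1 sat1].
case/andP: (mM1) => /forall_inP H1 tr1.
set M1' := [set m in M1 | m \subset ~: cover F :|: bigcapF F].
set M2 := [set [set x; f x] | x in Q].
exists (M1' :|: M2); split.
  apply/andP; split.
    apply/forall_inP=> m; rewrite in_setU => /orP [].
      by rewrite inE => /andP [mM _]; apply: H1.
    case/imsetP=> x xQ ->; apply/existsP; exists x; apply/existsP; exists (f x).
    by rewrite eqxx andbT; case: (hf x xQ).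
  apply: trivIsetU.
  - by apply: trivIsetS tr1; apply/subsetP=> m; rewrite inE => /andP [].
  - apply/trivIsetP => A B /imsetP [x xQ ->] /imsetP [y yQ ->] ne.
    have xy : x != y by apply: contraNneq ne => ->.
    have fxy : f x != f y by apply: contraNneq xy => E; apply/eqP; apply: finj.
    have [fxR _] := hf x xQ. have [fyR _] := hf y yQ.
    have [_ xS0] := BQ x xQ. have [_ yS0] := BQ y yQ.
    have [fxS0 _] := RQ _ fxR. have [fyS0 _] := RQ _ fyR.
    rewrite -setI_eq0; apply/eqP/setP=> z; rewrite !inE.
    apply/negP => /andP [/orP [] /eqP -> /orP [] /eqP E].
    + by move: xy; rewrite E eqxx.
    + by move: xS0; rewrite E fyS0.
    + by move: yS0; rewrite -E fxS0.
    + by move: fxy; rewrite E eqxx.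
  - rewrite -setI_eq0; apply/eqP/setP=> z; rewrite inE [z \in set0]inE.
    apply/negP => /andP [/bigcupP [m] + zm /bigcupP [m2 /imsetP [x xQ ->]]].
    rewrite inE => /andP [_ /subsetP /(_ z zm)].
    move=> H; rewrite !inE => /orP [] /eqP E; move: H; rewrite E !inE.
    + by have [c d] := QU x xQ; rewrite c (negbTE d).
    + by have [fxR _] := hf x xQ; have [c d] := RU _ fxR; rewrite c (negbTE d).
move=> z; rewrite inE => zU'.
case: (boolP (z \in cover F)) => zU.
  have zR : z \in R0.
    by move: zU; rewrite EU in_setU (negbTE zU') orbF => zS0; rewrite inE zS0 zU'.
  move: zR; rewrite -fQ => /imsetP [x xQ ->].
  exists x; first by have [] := BQ x xQ.
  by rewrite in_setU; apply/orP; right; apply/imsetP; exists x => //; rewrite setUC.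
have [y yI zyM] := sat1 z ltac:(by rewrite inE).
exists y; first by move: yI; rewrite EI inE => /andP [].
rewrite in_setU inE zyM /=; apply/orP; left.
apply/subsetP => w; rewrite !inE => /orP [] /eqP ->.
  by rewrite (negbTE zU).
by rewrite yI orbT.
Qed.

End G.

Unset Implicit Arguments.
Theorem corollary2p6 (T : finType) (e : rel T)
  (e_sym : symmetric e) (e_irr : irreflexive e) (T_nonempty : 0 < #|T|) :
  [<-> KE e;
       (exists F : {set {set T}},
          [/\ HKE F, F \subset Omega e,
              matching_between e (~: cover F) (bigcapF F) &
              forall G1 G2 : {set {set T}},
                G1 != set0 -> G2 != set0 -> G1 \subset F -> G2 \subset F ->
                [disjoint G1 & G2] ->
                #|bigcapF G1 :\: cover G2| = #|bigcapF G2 :\: cover G1|]);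
       (exists F : {set {set T}},
          [/\ HKE F, F \subset Omega e,
              matching_between e (~: cover F) (bigcapF F) &
              forall G1 G2 : {set {set T}},
                G1 != set0 -> G2 != set0 -> G1 \subset F -> G2 \subset F ->
                [disjoint G1 & G2] -> G1 :|: G2 = F ->
                #|bigcapF G1 :\: cover G2| = #|bigcapF G2 :\: cover G1|])].
Proof.
have [x0 _] : exists x0 : T, x0 \in T by apply/card_gt0P.
have alpha1 : 0 < alpha e.
  apply: leq_trans (alpha_ge (S := [set x0]) _); first by rewrite cards1.
  apply/forall_inP=> x; rewrite inE => /eqP ->; apply/forall_inP=> y.
  by rewrite inE => /eqP ->; rewrite e_irr.
tfae.
- move=> ke.
  have [S iS cS] := max_indep e.
  have S0 : S != set0.
    by apply/negP => /eqP S0; move: alpha1; rewrite -cS S0 cards0.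
  have G1S : forall G : {set {set T}}, G != set0 -> G \subset [set S] -> G = [set S].
    move=> G /set0Pn [A AG] sG; apply/eqP; rewrite eqEsubset sG sub1set.
    by move: (subsetP sG A AG); rewrite inE => /eqP <-.
  exists [set S]; split.
  + split.
      split; first by apply/set0Pn; exists S; rewrite inE.
      by rewrite inE eq_sym.
    exists (alpha e); split => // G G0 sG.
    by rewrite (G1S G G0 sG) cover1 /bigcapF big_set1 cS addnn mul2n.
  + by rewrite sub1set inE iS cS eqxx.
  + by rewrite cover1 /bigcapF big_set1; apply: KE_match.
  + move=> G1 G2 G10 G20 s1 s2; rewrite (G1S G1 G10 s1) (G1S G2 G20 s2).
    by rewrite -setI_eq0 setIid => /eqP /setP /(_ S); rewrite !inE eqxx.
- case=> F [h1 h2 h3 h4]; exists F; split => // G1 G2 a b c d f _.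
  exact: h4.
- case=> F [[[F0 _] [a [a0 ha]]] sFO mb _].
  have [S SF] : exists S, S \in F by apply/set0Pn.
  have [iS cS] := Omega_indep (subsetP sFO _ SF).
  have Sa : #|S| = a.
    have := ha [set S]; rewrite cover1 /bigcapF big_set1.
    have -> : [set S] \subset F by rewrite sub1set.
    have -> : [set S] != set0 by apply/set0Pn; exists S; rewrite inE.
    move=> /(_ isT isT); lia.
  have hke : forall G, G != set0 -> G \subset F ->
      #|cover G| + #|bigcapF G| = 2 * alpha e.
    by move=> G G0 sG; rewrite -cS Sa; apply: ha.
  have cF : #|F| = (#|F|.-1).+1.
    by rewrite prednK //; apply/card_gt0P; exists S.
  have [S' S'F ms] := reduce e_sym cF sFO hke mb.
  have [iS' _] := Omega_indep (subsetP sFO _ S'F).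
  exact: KE_of iS' ms.
Qed.
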